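(* Let $A$ be a DFA over a finite alphabet $\Sigma$ and let $S=s_1,\ldots,s_l$ be any non-empty sequence of strings $s_i\in\Sigma^*$. For any execution of prefix-free IDS on $S$ (with teacher $A$) there exists an execution of ID on the input set $\{\lambda,s_1,\ldots,s_l\}$ (with teacher $A$) such that for all $m\ge 0$: (i) for all $n\ge0$, if $K(n)=m$ then (a) for all $0\le j\le n$, $v_j^{IDS}=v_j^{ID}$; (b) for all $0\le j<n$, $v_n^{IDS}\neq v_j^{IDS}$; (c) for all $\alpha\in T_m^{IDS}$, $E_n^{IDS}(\alpha)=\{v_j^{IDS}: 0\le j\le n,\ \alpha v_j^{IDS}\in L(A)\}$; (ii) if $m>0$, letting $p$ be the greatest integer with $K(p)=m-1$, then for all $\alpha\in T_m^{IDS}$, $E_p^{IDS}(\alpha)=\{v_j^{IDS}:0\le j\le p,\ \alpha v_j^{IDS}\in L(A)\}$; (iii) the $m$-th partition refinement of IDS (the run of the refinement procedure while $k=m$) terminates.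
   Context: Let $A=\langle\Sigma,Q,F,q_0,\delta\rangle$ be a DFA with finite alphabet $\Sigma$ and language $L(A)$; $\lambda$ is the empty string. Membership queries ''is $w\in L(A)$?'' are answered correctly. Let $d_0$ be a fresh symbol not in $\Sigma^*$; $f(d_0,b)=d_0$ and $f(\alpha,b)=\alpha b$ for $\alpha\in\Sigma^*$. $U\oplus V=(U-V)\cup(V-U)$. Refinement procedure with respect to a finite set $P'$ (containing $d_0$) and a finite set $T\subseteq\Sigma^*$: while there exist $\alpha,\beta\in P'$ and $b\in\Sigma$ with $E_i(\alpha)=E_i(\beta)$ but $E_i(f(\alpha,b))\neq E_i(f(\beta,b))$: choose (nondeterministically) such $\alpha,\beta,b$ and some $\gamma\in E_i(f(\alpha,b))\oplus E_i(f(\beta,b))$, set $v_{i+1}=b\gamma$, increase $i$ by one, and for each $\alpha'\in T$ set $E_i(\alpha')=E_{i-1}(\alpha')\cup\{v_i\}$ if $\alpha' v_i\in L(A)$, else $E_i(\alpha')=E_{i-1}(\alpha')$. Always $E_i(d_0)=\emptyset$. ID algorithm (input: finite $P\subseteq\Sigma^*$): $P'=P\cup\{d_0\}$, $T=P\cup\{\alpha b:\alpha\in P,b\in\Sigma\}$, $i=0$, $v_0=\lambda$, $E_0(\alpha)=\{\lambda\}$ if $\alpha\in L(A)$ else $\emptyset$ for $\alpha\in T$; then run the refinement procedure w.r.t. $P'$ and $T$ (and then build a hypothesis automaton from the resulting sets). The values of its variables are denoted $v_j^{ID}$, $E_n^{ID}(\alpha)$. Prefix-free IDS algorithm (input: sequence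 $S=s_1,\ldots,s_l$): initialize $i=k=t=0$, $v_0=\lambda$, $P_0=\{\lambda\}$, $T_0=\{\lambda\}\cup\Sigma$, $E_0(\alpha)=\{\lambda\}$ if $\alpha\in L(A)$ else $\emptyset$ for $\alpha\in T_0$; run the refinement procedure w.r.t. $P'_0=P_0\cup\{d_0\}$ and $T_0$ and build hypothesis $M_0$. Then for each string $\alpha$ of $S$ in order: increase $k,t$ by one; $P_k=P_{k-1}\cup\{\alpha\}$, $P'_k=P_k\cup\{d_0\}$, $T_k=T_{k-1}\cup\{\alpha\}\cup\{\alpha b:b\in\Sigma\}$; for each $\beta\in T_k-T_{k-1}$ set $E_i(\beta)=\{v_j:0\le j\le i,\ \beta v_j\in L(A)\}$; run the refinement procedure w.r.t. $P'_k$ and $T_k$ (this is the $k$-th partition refinement); then produce hypothesis $M_t$ (equal to $M_{t-1}$ if $M_{t-1}$ classifies $\alpha$ correctly, otherwise newly constructed from the current sets $E_i$). Values of its variables are denoted $v_j^{IDS}$, $E_n^{IDS}(\alpha)$, $T_m^{IDS}$ (where $E_n^{IDS}(\alpha)$ is the value assigned to $E_i(\alpha)$ while $i=n$). Re-indexing function: $K=K^S:\mathbb N\to\mathbb N$ is the unique monotonically increasing function such that for each $n$, $K(n)$ is the least integer $m$ such that the variable $k$ of IDS has value $m$ while the variable $i$ has value $n$ (so $K(0)=0$). *)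

(* Defs.v *)
From mathcomp Require Import all_boot.
Set Implicit Arguments.
Unset Strict Implicit.
Unset Printing Implicit Defensive.

Record dfa (Sigma : finType) := DFA {
  dstate : finType;
  q0 : dstate;
  dfinal : pred dstate;
  delta : dstate -> Sigma -> dstate }.

(* L(A): strings are [seq Sigma], lambda = [::], concatenation = ++ *)
Definition accepts (Sigma : finType) (A : dfa Sigma) (w : seq Sigma) : bool :=
  @dfinal _ A (foldl (@delta _ A) (@q0 _ A) w).

Section Algo.
Variable Sigma : finType.
Notation str := (seq Sigma).
(* membership oracle: L w answers "is w in L(A)?" *)
Variable L : pred str.

(* A snapshot of the variables of the algorithms.
   k_ : the variable k;  i_ : the variable i;
   vs_ : [:: v_0; ...; v_i];  P_ : the current P (P_k for IDS);
   T_ : the current T;  E_ a : the current value of E_i(a) (for a in T). *)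
Record state := St {
  k_ : nat; i_ : nat; vs_ : seq str; P_ : seq str; T_ : seq str;
  E_ : str -> seq str }.

(* d_0 is None; strings alpha are Some alpha *)
Definition Pd (P : seq str) : seq (option str) := None :: map Some P.
Definition fext (x : option str) (b : Sigma) : option str :=
  omap (fun a => rcons a b) x.
Definition Eopt (E : str -> seq str) (x : option str) : seq str :=
  if x is Some a then E a else [::].   (* E_i(d_0) = empty *)

(* the while-condition of the refinement procedure (sets compared
   extensionally, =i) *)
Definition rcond (s : state) : Prop :=
  exists (a c : option str) (b : Sigma),
    a \in Pd (P_ s) /\ c \in Pd (P_ s) /\
    Eopt (E_ s) a =i Eopt (E_ s) c /\
    ~ (Eopt (E_ s) (fext a b) =i Eopt (E_ s) (fext c b)).

(* one iteration of the refinement loop (nondeterministic choice of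
   alpha, beta, b and gamma in the symmetric difference) *)
Definition rstep (s s' : state) : Prop :=
  exists (a c : option str) (b : Sigma) (g : str),
    a \in Pd (P_ s) /\ c \in Pd (P_ s) /\
        Eopt (E_ s) a =i Eopt (E_ s) c /\
        ~ (Eopt (E_ s) (fext a b) =i Eopt (E_ s) (fext c b)) /\
        (g \in Eopt (E_ s) (fext a b)) != (g \in Eopt (E_ s) (fext c b)) /\
        s' = St (k_ s) (i_ s).+1 (rcons (vs_ s) (b :: g)) (P_ s) (T_ s)
               (fun a' => if (a' \in T_ s) && L (a' ++ (b :: g))
                          then rcons (E_ s a') (b :: g) else E_ s a').

Definition E0 (a : str) : seq str := if L a then [:: [::]] else [::].

Definition id_init (P : seq str) : state :=
  St 0 0 [:: [::]] P (P ++ [seq rcons a b | a <- P, b <- enum Sigma]) E0.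

(* an execution (maximal run, stuttering once the loop has exited) *)
Definition ID_exec (P : seq str) (tau : nat -> state) : Prop :=
  tau 0 = id_init P /\
  forall t, rstep (tau t) (tau t.+1) \/ (~ rcond (tau t) /\ tau t.+1 = tau t).

Definition ids_init : state :=
  St 0 0 [:: [::]] [:: [::]] ([::] :: [seq [:: b] | b <- enum Sigma]) E0.

(* processing the next string alpha = s_{k+1} of S *)
Definition ids_add (S : seq str) (s : state) : state :=
  let a := nth [::] S (k_ s) in
  let nw := a :: [seq rcons a b | b <- enum Sigma] in
  St (k_ s).+1 (i_ s) (vs_ s) (rcons (P_ s) a) (T_ s ++ nw)
     (fun c => if (c \in nw) && (c \notin T_ s)
               then [seq v <- vs_ s | L (c ++ v)] else E_ s c).

Definition ids_step (S : seq str) (s s' : state) : Prop :=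
  rstep s s' \/ (~ rcond s /\ k_ s < size S /\ s' = ids_add S s).

Definition ids_final (S : seq str) (s : state) : Prop :=
  ~ rcond s /\ k_ s = size S.

Definition IDS_exec (S : seq str) (sigma : nat -> state) : Prop :=
  sigma 0 = ids_init /\
  forall t, ids_step S (sigma t) (sigma t.+1) \/
            (ids_final S (sigma t) /\ sigma t.+1 = sigma t).

(* K(n) = m : m is the least value of k while i has value n *)
Definition Kis (sigma : nat -> state) (n m : nat) : Prop :=
  (exists t, i_ (sigma t) = n /\ k_ (sigma t) = m) /\
  (forall t, i_ (sigma t) = n -> m <= k_ (sigma t)).

Definition accV (vs : seq str) (n : nat) (a : str) : seq str :=
  [seq v <- take n.+1 vs | L (a ++ v)].

End Algo.

(* Main.v *)
From Stdlib Require Import Classical ClassicalEpsilon.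
Require Import Defs.
From mathcomp Require Import all_boot zify.
Set Implicit Arguments. Unset Strict Implicit. Unset Printing Implicit Defensive.

Lemma undup_strict (X Y : eqType) (s : seq X) (f f' : X -> Y) (g : Y -> Y) a c :
  (forall x, x \in s -> g (f' x) = f x) -> a \in s -> c \in s ->
  f a = f c -> f' a != f' c ->
  size (undup (map f s)) < size (undup (map f' s)).
Proof.
move=> Hg As Cs Eac Nac.
set U := undup (map f' s).
have Uu : uniq U by apply: undup_uniq.
have yU : f' c \in U by rewrite mem_undup map_f.
have aU : f' a \in U by rewrite mem_undup map_f.
have sub : {subset undup (map f s) <= map g (rem (f' c) U)}.
  move=> z; rewrite mem_undup => /mapP [x xs ->].
  case: (eqVneq (f' x) (f' c)) => Hx.
    rewrite -Hg // Hx Hg // -Eac -Hg //; apply: map_f.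
    by rewrite (mem_rem_uniq _ Uu) inE Nac.
  rewrite -Hg //; apply: map_f.
  by rewrite (mem_rem_uniq _ Uu) inE Hx mem_undup map_f.
have := uniq_leq_size (undup_uniq _) sub.
rewrite size_map size_rem //.
have : 0 < size U by case: (U) yU.
lia.
Qed.
Section Gen.
Variable Sigma : finType.
Notation str := (seq Sigma).
Variable L : pred str.

Definition Lo (x : option str) (v : str) : bool :=
  if x is Some a then L (a ++ v) else false.
Definition keyo (vs : seq str) x := [seq v <- vs | Lo x v].

Definition INV (s : state Sigma) : Prop :=
  [/\ size (vs_ s) = (i_ s).+1, uniq (vs_ s),
      (forall a, a \in P_ s -> a \in T_ s /\ forall b, rcons a b \in T_ s) &
      (forall a, a \in T_ s -> E_ s a =i [seq v <- vs_ s | L (a ++ v)])].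

Lemma Lo_fext x b v : Lo (fext x b) v = Lo x (b :: v).
Proof. by case: x => //= a; rewrite cat_rcons. Qed.

Lemma Eopt_key s x : INV s -> x \in Pd (P_ s) ->
  Eopt (E_ s) x =i keyo (vs_ s) x /\
  forall b, Eopt (E_ s) (fext x b) =i keyo (vs_ s) (fext x b).
Proof.
case=> _ _ HP HE; case: x => [a|] /=; last first.
  by move=> _; split => [w|b w]; rewrite mem_filter.
rewrite /Pd inE /= mem_map; last by move=> ? ? [].
move=> /HP [aT rT]; split => [w|b w]; rewrite mem_filter.
  by rewrite HE // mem_filter.
by rewrite HE // mem_filter.
Qed.

Definition sg (s : state Sigma) x := map (Lo x) (vs_ s).
Definition cnt (s : state Sigma) := size (undup (map (sg s) (Pd (P_ s)))).

Lemma cnt_bound s : cnt s <= size (Pd (P_ s)).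
Proof. by rewrite /cnt (leq_trans (size_undup _)) // size_map. Qed.

Lemma rstep_INV s s' : INV s -> rstep L s s' ->
  [/\ INV s', k_ s' = k_ s, P_ s' = P_ s, T_ s' = T_ s &
     [/\ i_ s' = (i_ s).+1, exists v, vs_ s' = rcons (vs_ s) v & cnt s < cnt s']].
Proof.
move=> Hs [a [c [b [g [aP [cP [Eac [NE [Hg ->]]]]]]]]] /=.
have [Ka Kab] := Eopt_key Hs aP.
have [Kc Kcb] := Eopt_key Hs cP.
move: Hg; rewrite Kab Kcb !mem_filter !Lo_fext.
case gin : (g \in vs_ s); rewrite ?andbF ?andbT // => Hg.
have Hw : forall w, w \in vs_ s -> Lo a w = Lo c w.
  move=> w wv; have := Eac w; rewrite Ka Kc !mem_filter wv !andbT.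
  done.
have vnot : (b :: g) \notin vs_ s.
  by apply/negP => /Hw E; rewrite E eqxx in Hg.
case: Hs => Hsz Hu HP HE.
split => //; last split => //.
- split => //=; first by rewrite size_rcons Hsz.
  + by rewrite rcons_uniq vnot.
  + move=> a' a'T w; rewrite a'T /= filter_rcons.
    case: (L (a' ++ b :: g)); rewrite ?mem_rcons ?inE HE //.
- by exists (b :: g).
- rewrite /cnt.
  apply: (undup_strict (g := take (size (vs_ s))) (a:=a) (c:=c)) => //.
  + move=> x _; rewrite /sg /= map_rcons -cats1 take_size_cat //.
    by rewrite size_map.
  + by rewrite /sg; apply/eq_in_map => w wv; apply: Hw.
  + rewrite /sg /= !map_rcons; apply/negP => /eqP /rcons_inj [_].
    by move/eqP; rewrite (negbTE Hg).
Qed.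

Lemma ids_add_INV S s : INV s -> INV (ids_add L S s).
Proof.
case=> Hsz Hu HP HE; split => //=.
- move=> a; rewrite mem_rcons inE => /orP [/eqP ->|aP].
    split; first by rewrite mem_cat inE eqxx orbT.
    by move=> b; rewrite mem_cat inE map_f ?orbT // mem_enum.
  by have [aT rT] := HP a aP; split => [|b]; rewrite mem_cat ?aT ?rT.
- move=> c; rewrite mem_cat.
  case H : ((c \in _ :: _) && (c \notin T_ s)) => //.
  case cT : (c \in T_ s) => /= cn; first exact: HE.
  by rewrite cn cT in H.
Qed.
End Gen.
Section IDS.
Variables (Sigma : finType) (L : pred (seq Sigma)) (S : seq (seq Sigma))
  (sigma : nat -> state Sigma).
Hypothesis HS : IDS_exec L S sigma.

Definition IDSinv (s : state Sigma) :=
  [/\ INV L s, prefix [:: [::]] (vs_ s) & {subset P_ s <= [::] :: S}].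

Lemma sinv t : IDSinv (sigma t).
Proof.
case: HS => H0 Hst; elim: t => [|t IH].
  rewrite H0; split => //; last by move=> a; rewrite inE => /eqP ->; rewrite inE eqxx.
  split => //=.
    move=> a; rewrite inE => /eqP ->; split; first by rewrite inE eqxx.
    by move=> b; rewrite inE map_f ?orbT // mem_enum.
  by move=> a _ w; rewrite /E0 cats0; case: (L a).
case: IH => I1 I2 I3.
case: (Hst t) => [[R|[NR [Hk ->]]]|[_ ->]] //.
- have [I' k' P' T' [_ [v Ev] _]] := rstep_INV I1 R.
  split => //; first by rewrite Ev (prefix_trans I2) // prefix_rcons.
  by rewrite P'.
- split => //; first exact: ids_add_INV.
  move=> a /=; rewrite mem_rcons inE => /orP [/eqP ->|aP]; last exact: I3.
  by rewrite inE mem_nth ?orbT.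
Qed.

Notation V u := (vs_ (sigma u)).

Lemma Vstep t : V t.+1 = V t \/
  (exists v, V t.+1 = rcons (V t) v) /\ rstep L (sigma t) (sigma t.+1).
Proof.
case: HS => _ Hst.
case: (Hst t) => [[R|[NR [Hk ->]]]|[_ ->]]; [right|by left|by left].
have [I1 _ _] := sinv t.
have [_ _ _ _ [_ Ev _]] := rstep_INV I1 R.
by split.
Qed.

Lemma chain u w : u <= w -> prefix (V u) (V w).
Proof.
elim: w => [|w IH]; first by rewrite leqn0 => /eqP ->; apply: prefix_refl.
rewrite leq_eqVlt => /orP [/eqP ->|]; first exact: prefix_refl.
move/IH => H; apply: (prefix_trans H).
case: (Vstep w) => [->|[[v ->] _]]; [exact: prefix_refl|exact: prefix_rcons].
Qed.

Lemma chain2 u w : prefix (V u) (V w) || prefix (V w) (V u).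
Proof. by case: (leqP u w) => H; [rewrite chain | rewrite (chain (ltnW H)) orbT]. Qed.

Lemma pre_le (p q : seq (seq Sigma)) :
  prefix p q || prefix q p -> size q <= size p -> prefix q p.
Proof.
case/orP => // H Hs.
have Hs' := size_prefix H.
have E : size p = size q by apply/eqP; rewrite eqn_leq Hs Hs'.
move: H; rewrite prefixE E take_size => /eqP ->; exact: prefix_refl.
Qed.

Lemma hist u p : prefix p (V u) -> 0 < size p < size (V u) ->
  exists u', V u' = p /\ rstep L (sigma u') (sigma u'.+1).
Proof.
elim: u => [|u IH].
  have [_ I2 _] := sinv 0.
  case: HS => -> _ /= _; case: (size p) => //.
case: (Vstep u) => [->|[[v Ev] R]]; first exact: IH.
move=> Hp /andP [Hp0 Hps].
move: Hps; rewrite Ev size_rcons ltnS leq_eqVlt => /orP [/eqP Es|Hlt].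
  exists u; split => //.
  move: Hp; rewrite Ev prefixE Es -cats1 take_size_cat // => /eqP //.
apply: IH; last by rewrite Hp0.
move: Hp; rewrite Ev !prefixE -cats1 takel_cat //; exact: ltnW.
Qed.

Lemma phase N t0 :
  (exists t, k_ (sigma t) = k_ (sigma t0) /\ ~ rcond (sigma t)) \/
  [/\ cnt L (sigma t0) + N <= cnt L (sigma (t0 + N)),
      k_ (sigma (t0 + N)) = k_ (sigma t0) & P_ (sigma (t0 + N)) = P_ (sigma t0)].
Proof.
elim: N => [|N [IH|[H1 H2 H3]]]; first by right; rewrite !addn0.
- by left.
case: HS => _ Hst.
case: (Hst (t0 + N)) => [[R|[NR _]]|[[NR _] _]]; try by left; exists (t0 + N).
have [I1 _ _] := sinv (t0 + N).
have [_ k' P' _ [_ _ C]] := rstep_INV I1 R.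
have -> : t0 + N.+1 = (t0 + N).+1 by rewrite addnS.
right; rewrite k' P'; split; [|exact: H2|exact: H3].
by rewrite addnS (leq_trans _ C) // ltnS.
Qed.

Lemma terminates m : (exists t, k_ (sigma t) = m) ->
  exists t, k_ (sigma t) = m /\ ~ rcond (sigma t).
Proof.
move=> [t0 <-].
case: (phase (size (Pd (P_ (sigma t0)))).+1 t0) => // [[H1 _ H3]].
have := cnt_bound L (sigma (t0 + (size (Pd (P_ (sigma t0)))).+1)).
rewrite H3 => H; have := leq_trans H1 H.
by rewrite addnS ltnNge leq_addl.
Qed.
Definition PP := [::] :: S.
Definition TT := PP ++ [seq rcons a b | a <- PP, b <- enum Sigma].

Definition Good (s : state Sigma) :=
  [/\ INV L s, P_ s = PP, T_ s = TT &
      forall u, prefix (vs_ s) (V u) || prefix (V u) (vs_ s)].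

Definition Rel s s' := Good s ->
  [/\ Good s', rstep L s s' \/ (~ rcond s /\ s' = s) &
      forall u, size (vs_ s) < size (V u) -> vs_ s' = take (size (vs_ s)).+1 (V u)].

Lemma Pd_sub (P1 P2 : seq (seq Sigma)) x :
  {subset P1 <= P2} -> x \in Pd P1 -> x \in Pd P2.
Proof.
move=> H; rewrite /Pd !inE; case: x => //= a.
rewrite !mem_map; [exact: H|by move=> ? ? []|by move=> ? ? []].
Qed.

Lemma mirror s u' : Good s -> vs_ s = V u' -> rstep L (sigma u') (sigma u'.+1) ->
  exists s', rstep L s s' /\ vs_ s' = V u'.+1.
Proof.
move=> [Is Ps Ts _] Evs [a [c [b [g [aP [cP [Eac [NE [Hg Es]]]]]]]]].
have [Iu _ Psub] := sinv u'.
have aP' : a \in Pd (P_ s) by rewrite Ps; exact: Pd_sub Psub aP.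
have cP' : c \in Pd (P_ s) by rewrite Ps; exact: Pd_sub Psub cP.
have [Ka Kab] := Eopt_key Is aP'; have [Kc Kcb] := Eopt_key Is cP'.
have [Ka' Kab'] := Eopt_key Iu aP; have [Kc' Kcb'] := Eopt_key Iu cP.
exists (St (k_ s) (i_ s).+1 (rcons (vs_ s) (b :: g)) (P_ s) (T_ s)
  (fun a' => if (a' \in T_ s) && L (a' ++ b :: g)
             then rcons (E_ s a') (b :: g) else E_ s a')).
split; last by rewrite Es /= Evs.
exists a, c, b, g; split => //; split => //; split.
  by move=> w; rewrite Ka Kc Evs -Ka' -Kc'; exact: Eac.
split.
  by move=> H; apply: NE => w; rewrite Kab' Kcb' -Evs -Kab -Kcb; exact: H.
by split => //; rewrite Kab Kcb Evs -Kab' -Kcb'.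
Qed.

Lemma exR s : exists s', Rel s s'.
Proof.
case: (classic (Good s)) => [G|NG]; last by exists s.
have [Is Ps Ts Cs] := G.
case: (classic (exists u, size (vs_ s) < size (V u))) => [[u0 Hu0]|NU].
  have Hp : prefix (vs_ s) (V u0).
    case/orP: (Cs u0) => // H; have := size_prefix H.
    by rewrite leqNgt Hu0.
  have [Hsz _ _ _] := Is.
  have [u' [Eu' R]] : exists u', V u' = vs_ s /\ rstep L (sigma u') (sigma u'.+1).
    by apply: hist Hp _; rewrite Hu0 Hsz.
  have [s' [R' Es']] := mirror G (esym Eu') R.
  have [Is' k' P' T' [_ [v Ev] _]] := rstep_INV Is R'.
  have [Iu _ _] := sinv u'.
  have [_ _ _ _ [_ [v' Ev'] _]] := rstep_INV Iu R.
  exists s' => _; split.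
  - split => //; [by rewrite P'|by rewrite T'|].
    by move=> u; rewrite Es' chain2.
  - by left.
  - move=> u Hu; rewrite Es'.
    have H : prefix (V u'.+1) (V u).
      apply: pre_le; first by rewrite chain2.
      by rewrite Ev' size_rcons Eu'.
    move: H; rewrite prefixE => /eqP <-.
    by rewrite Ev' size_rcons Eu'.
case: (classic (rcond s)) => [[a [c [b [aP [cP [Eac NE]]]]]]|NR]; last first.
  exists s => _; split; [exact: G|by right|by move=> u Hu; case: NU; exists u].
have [g Hg] : exists g, (g \in Eopt (E_ s) (fext a b)) != (g \in Eopt (E_ s) (fext c b)).
  apply: NNPP => H; apply: NE => w.
  by apply: NNPP => Hw; apply: H; exists w; apply/eqP.
set s' := St (k_ s) (i_ s).+1 (rcons (vs_ s) (b :: g)) (P_ s) (T_ s)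
  (fun a' => if (a' \in T_ s) && L (a' ++ b :: g)
             then rcons (E_ s a') (b :: g) else E_ s a').
have R : rstep L s s'.
  by exists a, c, b, g; do 5 (split => //).
have [Is' k' P' T' _] := rstep_INV Is R.
exists s' => _; split.
- split; [exact: Is'|by rewrite P'|by rewrite T'|].
  move=> u; apply/orP; right.
  have H : prefix (V u) (vs_ s).
    apply: pre_le; first exact: Cs.
    by rewrite leqNgt; apply/negP => H; apply: NU; exists u.
  apply: (prefix_trans H); exact: prefix_rcons.
- by left.
- by move=> u Hu; case: NU; exists u.
Qed.

Definition fnext s := proj1_sig (constructive_indefinite_description _ (exR s)).
Lemma fR s : Rel s (fnext s).
Proof. exact: (proj2_sig (constructive_indefinite_description _ (exR s))). Qed.

Definition tau t := iter t fnext (id_init L PP).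

Lemma Good0 : Good (id_init L PP).
Proof.
have ET : T_ (id_init L PP) = TT := erefl.
have EP : P_ (id_init L PP) = PP := erefl.
split => //.
- split => //; rewrite ?ET ?EP.
  + move=> a aP; split; first by rewrite /TT mem_cat aP.
    by move=> b; rewrite /TT mem_cat allpairs_f ?orbT // mem_enum.
  + by move=> a _ w /=; rewrite /E0 cats0; case: (L a).
- by move=> u; have [_ H _] := sinv u; rewrite H.
Qed.

Lemma tauGood t : Good (tau t).
Proof. elim: t => [|t IH]; [exact: Good0|by have [] := fR IH]. Qed.

Lemma tau_ext u n : n < size (V u) -> exists t', vs_ (tau t') = take n.+1 (V u).
Proof.
elim: n => [|n IH] Hn.
  exists 0; have [_ H _] := sinv u; move: H; rewrite prefixE => /eqP //.
have [t' Et'] := IH (ltnW Hn).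
exists t'.+1.
have [_ _ H] := fR (tauGood t').
rewrite (H u) Et' ?size_takel //; exact: ltnW.
Qed.
End IDS.

Theorem mainTheorem3 (Sigma : finType) (A : dfa Sigma) (S : seq (seq Sigma)) :
  S != [::] ->
  forall sigma : nat -> state Sigma,
    IDS_exec (accepts A) S sigma ->
    exists tau : nat -> state Sigma,
      ID_exec (accepts A) ([::] :: S) tau /\
      forall m : nat,
        (* (i) *)
        (forall n : nat, Kis sigma n m ->
           forall t, i_ (sigma t) = n -> k_ (sigma t) = m ->
             [/\ (* (a) *)
                 (exists t', i_ (tau t') = n /\
                    forall j, j <= n ->
                      nth [::] (vs_ (sigma t)) j = nth [::] (vs_ (tau t')) j),
                 (* (b) *)
                 (forall j, j < n ->
                      nth [::] (vs_ (sigma t)) n != nth [::] (vs_ (sigma t)) j) &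
                 (* (c) *)
                 (forall a, a \in T_ (sigma t) ->
                      E_ (sigma t) a =i accV (accepts A) (vs_ (sigma t)) n a)]) /\
        (* (ii) *)
        (0 < m -> forall p : nat,
           Kis sigma p m.-1 -> (forall p', Kis sigma p' m.-1 -> p' <= p) ->
           forall t, i_ (sigma t) = p -> k_ (sigma t) = m ->
             forall a, a \in T_ (sigma t) ->
               E_ (sigma t) a =i accV (accepts A) (vs_ (sigma t)) p a) /\
        (* (iii) *)
        ((exists t, k_ (sigma t) = m) ->
           exists t, k_ (sigma t) = m /\ ~ rcond (sigma t)).
Proof.
move=> _ sigma HS.
exists (tau HS); split.
  split => // t; by have [_ H _] := fR HS (tauGood HS t).
move=> m; split; [|split].
- move=> n _ t Hi _.
  have [[Hsz Hu _ HE] _ _] := sinv HS t.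
  split.
  + have : n < size (vs_ (sigma t)) by rewrite Hsz Hi.
    move/(tau_ext HS) => [t' Et'].
    exists t'; have [[Hsz' _ _ _] _ _ _] := tauGood HS t'.
    rewrite take_oversize in Et'; last by rewrite Hsz Hi.
    split; last by move=> j _; rewrite Et'.
    by apply/eqP; rewrite -eqSS -Hsz' Et' Hsz Hi.
  + move=> j Hj; rewrite nth_uniq //; first by rewrite gtn_eqF.
      by rewrite Hsz Hi.
    by rewrite Hsz Hi ltnW.
  + move=> a aT w; rewrite HE // /accV take_oversize //.
    by rewrite Hsz Hi.
- move=> _ p _ _ t Hi _ a aT w.
  have [[Hsz Hu _ HE] _ _] := sinv HS t.
  by rewrite HE // /accV take_oversize // Hsz Hi.
- exact: (terminates HS).
Qed.
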